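(* Let $\mathbb{T}$ be a geometric theory over $\Sigma$. Then the topological spaces $M_{\mathbb{T}}$ and $I_{\mathbb{T}}$ (with the logical topologies) are sober, i.e.\ every completely prime filter of open sets is the neighbourhood filter of a unique point.
   Context: Let $\Sigma$ be a single-sorted first-order signature with equality, $\kappa\geq|\Sigma|+\aleph_0$ an infinite cardinal, and $\mathbb{S}$ a fixed set of cardinality at least $\kappa$. An $\mathbb{S}$-indexed $\Sigma$-structure is one whose underlying set is a quotient $A/{\sim}$ of a subset $A\subseteq\mathbb{S}$ (elements $[a]$). $M_\Sigma$ is the set of all such structures and $I_\Sigma$ the set of all isomorphisms between them, with domain and codomain maps $d,c$. The logical topology on $M_\Sigma$ is the coarsest containing the sets $\{\mathbf{M}:[a]\in\mathbf{M}\}$ ($a\in\mathbb{S}$, meaning $a$ lies in the subset of which $\mathbf{M}$'s universe is a quotient), $\{\mathbf{M}:[\mathbf{a}]\in R^{\mathbf{M}}\}$ (each $n$-ary relation symbol $R$, including equality and nullary symbols, each $n$-tuple $\mathbf{a}$ from $\mathbb{S}$), and $\{\mathbf{M}:f^{\mathbf{M}}([\mathbf{a}])=[b]\}$ (each function symbol $f$). The logical topology on $I_\Sigma$ is the coarsest making $d,c$ continuous and containing all $\{\mathbf{f}:[a]\in d(\mathbf{f}),[b]\in c(\mathbf{f}),\mathbf{f}([a])=[b]\}$. $M_{\mathbb{T}}\subseteq M_\Sigma$ is the set of $\mathbb{S}$-indexed $\mathbb{T}$-models and $I_{\mathbb{T}}\subseteq I_\Sigma$ the isomorphisms between them, with subspace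 topologies. A completely prime filter of opens is a filter $F$ of open sets such that whenever a union $\bigcup\mathcal{S}$ of open sets lies in $F$, some member of $\mathcal{S}$ lies in $F$. *)

(* Defs.v *)
From mathcomp Require Import all_boot.
Set Implicit Arguments.
Unset Strict Implicit.
Unset Printing Implicit Defensive.

Record signature := Signature {
  funsym : Type;
  relsym : Type;                 (* relation symbols (equality is built in) *)
  farity : funsym -> nat;
  rarity : relsym -> nat }.

Section Syntax.
Variable Sig : signature.

Inductive term (n : nat) : Type :=
| tvar : 'I_n -> term n
| tfun (f : funsym Sig) : ('I_(farity f) -> term n) -> term n.

(* geometric formulas in a context of n variables; Gex binds variable n *)
Inductive gformula : nat -> Type :=
| Grel n (r : relsym Sig) : ('I_(rarity r) -> term n) -> gformula n
| Geq n : term n -> term n -> gformula n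
| Gtop n : gformula n
| Gbot n : gformula n
| Gand n : gformula n -> gformula n -> gformula n
| Gor n (I : Type) : (I -> gformula n) -> gformula n
| Gex n : gformula n.+1 -> gformula n.

Record sequent := Sequent {
  ctx : nat;
  antec : gformula ctx;
  succ : gformula ctx }.

Definition theory := sequent -> Prop.
End Syntax.

(** * S-indexed structures: universe A/~ with A a subset of S.
    Represented by a partial equivalence relation [eqv] on S whose domain is A
    (so [eqv a a] means a ∈ A, and [eqv a b] means [a] = [b]); relations and
    functions on A/~ are represented by saturated relations on representatives. *)
Section Structures.
Variables (Sig : signature) (S : Type).

Record structure := Structure {
  eqv : S -> S -> Prop;
  eqv_sym : forall a b, eqv a b -> eqv b a;
  eqv_trans : forall a b c, eqv a b -> eqv b c -> eqv a c;
  srel : forall r : relsym Sig, ('I_(rarity r) -> S) -> Prop;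
  rel_dom : forall r as_, @srel r as_ -> forall i, eqv (as_ i) (as_ i);
  rel_sat : forall r as_ bs, @srel r as_ -> (forall i, eqv (as_ i) (bs i)) -> @srel r bs;
  sfn : forall f : funsym Sig, ('I_(farity f) -> S) -> S -> Prop;  (* graph: f([as]) = [b] *)
  fn_dom : forall f as_ b, @sfn f as_ b -> (forall i, eqv (as_ i) (as_ i)) /\ eqv b b;
  fn_sat : forall f as_ bs b c, @sfn f as_ b -> (forall i, eqv (as_ i) (bs i)) ->
             eqv b c -> @sfn f bs c;
  fn_total : forall f as_, (forall i, eqv (as_ i) (as_ i)) -> exists b, @sfn f as_ b;
  fn_func : forall f as_ b c, @sfn f as_ b -> @sfn f as_ c -> eqv b c }.

Arguments srel s r _ : clear implicits.
Arguments sfn s f _ _ : clear implicits.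

Definition indom (M : structure) (a : S) := eqv M a a.

(* isomorphisms between S-indexed structures; [imap a b] means f([a]) = [b] *)
Record iso := Iso {
  isrc : structure;
  itgt : structure;
  imap : S -> S -> Prop;
  imap_dom : forall a b, imap a b -> indom isrc a /\ indom itgt b;
  imap_sat : forall a a' b b', imap a b -> eqv isrc a a' -> eqv itgt b b' -> imap a' b';
  imap_total : forall a, indom isrc a -> exists b, imap a b;
  imap_func : forall a b b', imap a b -> imap a b' -> eqv itgt b b';
  imap_inj : forall a a' b, imap a b -> imap a' b -> eqv isrc a a';
  imap_surj : forall b, indom itgt b -> exists a, imap a b;
  imap_rel : forall r as_ bs, (forall i, imap (as_ i) (bs i)) ->
               (srel isrc r as_ <-> srel itgt r bs);
  imap_fn : forall f as_ bs a b, (forall i, imap (as_ i) (bs i)) -> imap a b ->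
               (sfn isrc f as_ a <-> sfn itgt f bs b) }.

(** Semantics of geometric logic; valuations are maps nat -> S, only the first
    n values matter (and must lie in A) for a formula in context n. *)
Fixpoint teval (M : structure) n (v : nat -> S) (t : term Sig n) (b : S) : Prop :=
  match t with
  | @tvar _ _ i => eqv M (v i) b
  | @tfun _ _ f args => exists bs : 'I_(farity f) -> S,
      (forall i, teval M v (args i) (bs i)) /\ sfn M f bs b
  end.

Fixpoint sat (M : structure) n (v : nat -> S) (phi : gformula Sig n) : Prop :=
  match phi with
  | @Grel _ _ r args => exists bs : 'I_(rarity r) -> S,
      (forall i, teval M v (args i) (bs i)) /\ srel M r bs
  | @Geq _ _ t1 t2 => exists b1 b2, teval M v t1 b1 /\ teval M v t2 b2 /\ eqv M b1 b2
  | @Gtop _ _ => True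
  | @Gbot _ _ => False
  | @Gand _ _ p q => sat M v p /\ sat M v q
  | @Gor _ _ J ps => exists i : J, sat M v (ps i)
  | @Gex _ n p => exists a, indom M a /\ sat M (fun k => if k == n then a else v k) p
  end.

Definition admissible (M : structure) n (v : nat -> S) := forall i, i < n -> indom M (v i).

Definition seq_valid (M : structure) (s : sequent Sig) : Prop :=
  forall v, admissible M (ctx s) v -> sat M v (antec s) -> sat M v (succ s).

Definition is_model (T : theory Sig) (M : structure) := forall s, T s -> seq_valid M s.

Inductive gen_open X (B : (X -> Prop) -> Prop) : (X -> Prop) -> Prop :=
| go_basic U : B U -> gen_open B U
| go_top : gen_open B (fun _ => True)
| go_inter U V : gen_open B U -> gen_open B V -> gen_open B (fun x => U x /\ V x)
| go_union (F : (X -> Prop) -> Prop) : (forall U, F U -> gen_open B U) ->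
    gen_open B (fun x => exists U, F U /\ U x).

Definition subspace_open X (opn : (X -> Prop) -> Prop) (P : X -> Prop)
  (V : {x | P x} -> Prop) : Prop :=
  exists U, opn U /\ forall x, V x <-> U (proj1_sig x).

Definition M_subbasis (U : structure -> Prop) : Prop :=
  (exists a, U = fun M => indom M a) \/
  (exists a b, U = fun M => eqv M a b) \/
  (exists r as_, U = fun M => srel M r as_) \/
  (exists f as_ b, U = fun M => sfn M f as_ b).

Definition M_open := gen_open M_subbasis.

Definition I_subbasis (U : iso -> Prop) : Prop :=
  (exists V, M_open V /\ U = fun f => V (isrc f)) \/
  (exists V, M_open V /\ U = fun f => V (itgt f)) \/
  (exists a b, U = fun f => indom (isrc f) a /\ indom (itgt f) b /\ imap f a b).

Definition I_open := gen_open I_subbasis.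

Definition MT_open (T : theory Sig) := @subspace_open _ M_open (is_model T).
Definition IT_open (T : theory Sig) :=
  @subspace_open _ I_open (fun f => is_model T (isrc f) /\ is_model T (itgt f)).
End Structures.

Definition completely_prime_filter X (opn : (X -> Prop) -> Prop)
  (F : (X -> Prop) -> Prop) : Prop :=
  (forall U, F U -> opn U) /\
  F (fun _ => True) /\
  (forall U V, F U -> opn V -> (forall x, U x -> V x) -> F V) /\
  (forall U V, F U -> F V -> F (fun x => U x /\ V x)) /\
  (forall Fam : (X -> Prop) -> Prop, (forall U, Fam U -> opn U) ->
     F (fun x => exists U, Fam U /\ U x) -> exists U, Fam U /\ F U).

Definition sober X (opn : (X -> Prop) -> Prop) : Prop :=
  forall F, completely_prime_filter opn F ->
    exists! x : X, forall U, opn U -> (F U <-> U x).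

(* Main.v *)
Require Import Defs.
From mathcomp Require Import all_boot.
From Stdlib Require Import FunctionalExtensionality PropExtensionality ProofIrrelevance.
Set Implicit Arguments.
Unset Strict Implicit.


Lemma pred_ext X (U V : X -> Prop) : (forall x, U x <-> V x) -> U = V.
Proof.
move=> H; apply: functional_extensionality => x; apply: propositional_extensionality; exact: H.
Qed.

Lemma open_ext X (B : (X -> Prop) -> Prop) (U V : X -> Prop) :
  gen_open B U -> (forall x, U x <-> V x) -> gen_open B V.
Proof. by move=> HU /pred_ext <-. Qed.

Lemma open_ex X (B : (X -> Prop) -> Prop) (J : Type) (U : J -> X -> Prop) :
  (forall j, gen_open B (U j)) -> gen_open B (fun x => exists j, U j x).
Proof.
move=> H; apply: (@open_ext _ B (fun x => exists W, (exists j, W = U j) /\ W x)).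
  by apply: go_union => W [j ->].
- move=> x; split; first by case=> W [[j ->] Hx]; exists j.
  by case=> j Hj; exists (U j); split; [exists j|].
Qed.

Lemma all_ordS k (Q : 'I_k.+1 -> Prop) :
  (forall i, Q i) <-> Q ord0 /\ (forall j : 'I_k, Q (lift ord0 j)).
Proof.
split; first by move=> H; split.
case=> H0 H i; case: (unliftP ord0 i) => [j ->|->] //.
Qed.

Lemma all_ord0 (Q : 'I_0 -> Prop) : forall i, Q i.
Proof. by case=> m Hm; exfalso; move: Hm; rewrite ltn0. Qed.

Lemma open_all X (B : (X -> Prop) -> Prop) k (U : 'I_k -> X -> Prop) :
  (forall i, gen_open B (U i)) -> gen_open B (fun x => forall i, U i x).
Proof.
elim: k U => [|k IH] U H.
  apply: (open_ext (go_top B)) => x; split=> // _; exact: all_ord0.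
apply: (open_ext (go_inter (H ord0) (IH (fun j => U (lift ord0 j)) (fun j => H _)))).
move=> x; rewrite (all_ordS (fun i => U i x)); by [].
Qed.

Record goodF X (B : (X -> Prop) -> Prop) (P : X -> Prop) (G : (X -> Prop) -> Prop) : Prop :=
  GoodF {
  G_mono : forall U V, G U -> gen_open B V -> (forall x, P x -> U x -> V x) -> G V;
  G_top : G (fun _ => True);
  G_and : forall U V, G U -> G V -> G (fun x => U x /\ V x);
  G_prime : forall (J : Type) (W : J -> X -> Prop), (forall j, gen_open B (W j)) ->
     G (fun x => exists j, W j x) -> exists j, G (W j) }.

Lemma G_all X B P G (HG : @goodF X B P G) k (U : 'I_k -> X -> Prop) :
  (forall i, gen_open B (U i)) -> (forall i, G (U i)) -> G (fun x => forall i, U i x).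
Proof.
elim: k U => [|k IH] U HU H.
  apply: (G_mono HG (G_top HG)); first exact: open_all.
  move=> x _ _; exact: all_ord0.
apply: (G_mono HG (G_and HG (H ord0) (IH (fun j => U (lift ord0 j)) (fun j => HU _) (fun j => H _)))).
  exact: open_all.
move=> x _; by rewrite (all_ordS (fun i => U i x)).
Qed.

Lemma good_open_iff X B P G (HG : @goodF X B P G) (x : X) :
  (forall W, B W -> (G W <-> W x)) -> forall W, gen_open B W -> (G W <-> W x).
Proof.
move=> Hb W HW; elim: HW.
- exact: Hb.
- split=> [_|_] //; exact: (G_top HG).
- move=> U V HU IHU HV IHV; split.
    move=> H; split; [apply/IHU|apply/IHV]; apply: (G_mono HG H) => // y _ []//.
  by case=> /IHU H1 /IHV H2; apply: (G_and HG).
- move=> Fam HFam IH; split.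
    move=> H; have [[U HU] /= HGU] := G_prime HG (W := fun j : {U | Fam U} => proj1_sig j)
       (fun j => HFam _ (proj2_sig j)) (G_mono HG H (open_ex (fun j : {U | Fam U} => HFam _ (proj2_sig j)))
          (fun y _ => fun '(ex_intro U (conj HU Hy)) => ex_intro _ (exist _ U HU) Hy)).
    by exists U; split=> //; apply/IH.
  case=> U [HU Hx]; apply: (G_mono HG (U := U)); first by apply/(proj2 (IH U HU)).
    exact: go_union.
  by move=> y _ Hy; exists U.
Qed.

Definition Fp X (P : X -> Prop) (F : ({x | P x} -> Prop) -> Prop) (U : X -> Prop) :=
  F (fun x => U (proj1_sig x)).

Lemma Fp_good X (B : (X -> Prop) -> Prop) (P : X -> Prop) F :
  completely_prime_filter (@subspace_open X (gen_open B) P) F -> goodF B P (Fp F).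
Proof.
case=> Fo [Ftop [Fmono [Fand Fprime]]]; split.
- move=> U V HU HV HUV; apply: (Fmono _ _ HU); first by exists V.
  by case=> x px /=; apply: HUV.
- exact: Ftop.
- by move=> U V; apply: Fand.
- move=> J W HW HF.
  have HFam : forall Z, (exists j, Z = fun x : {x | P x} => W j (proj1_sig x)) ->
     subspace_open (gen_open B) Z.
    by move=> Z [j ->]; exists (W j); split.
  have HU : F (fun x => exists Z, (exists j, Z = fun x : {x | P x} => W j (proj1_sig x)) /\ Z x).
    apply: (Fmono _ _ HF).
      exists (fun y => exists j, W j y); split; first exact: open_ex.
      move=> x; split.
        by case=> Z [[j ->] Hz]; exists j.
      by case=> j Hj; exists (fun x : {x | P x} => W j (proj1_sig x)); split=> //; exists j.
    by move=> x [j Hj]; exists (fun x : {x | P x} => W j (proj1_sig x)); split=> //; exists j.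
  have [Z [[j ->] HZ]] := Fprime _ HFam HU.
  by exists j.
Qed.



Lemma open_indom {Sig S} (a : S) : gen_open (@M_subbasis Sig S) (fun M => indom M a).
Proof. apply: go_basic; left; by exists a. Qed.
Lemma open_eqv {Sig S} (a b : S) : gen_open (@M_subbasis Sig S) (fun M => eqv M a b).
Proof. apply: go_basic; right; left; by exists a, b. Qed.
Lemma open_srel {Sig S} r (as_ : 'I_(rarity r) -> S) :
  gen_open (@M_subbasis Sig S) (fun M => srel M as_).
Proof. apply: go_basic; right; right; left; by exists r, as_. Qed.
Lemma open_sfn {Sig S} f (as_ : 'I_(farity f) -> S) b :
  gen_open (@M_subbasis Sig S) (fun M => sfn M as_ b).
Proof. apply: go_basic; right; right; right; by exists f, as_, b. Qed.

Notation good Sig S T G := (@goodF (structure Sig S) (@M_subbasis Sig S) (is_model T) G).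

Lemma mk_sym Sig S T G (HG : good Sig S T G) (a b : S) :
  G (fun N => eqv N a b) -> G (fun N => eqv N b a).
Proof. move=> H; apply: (G_mono HG H (open_eqv _ _)) => N _; exact: eqv_sym. Qed.

Lemma mk_trans Sig S T G (HG : good Sig S T G) (a b c : S) :
  G (fun N => eqv N a b) -> G (fun N => eqv N b c) -> G (fun N => eqv N a c).
Proof.
move=> H1 H2; apply: (G_mono HG (G_and HG H1 H2) (open_eqv _ _)) => N _ [];
  exact: eqv_trans.
Qed.

Lemma mk_rel_dom Sig S T G (HG : good Sig S T G) r (as_ : 'I_(rarity r) -> S) :
  G (fun N => srel N as_) -> forall i, G (fun N => eqv N (as_ i) (as_ i)).
Proof. move=> H i; apply: (G_mono HG H (open_eqv _ _)) => N _ Hr; exact: rel_dom Hr i. Qed.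

Lemma mk_rel_sat Sig S T G (HG : good Sig S T G) r (as_ bs : 'I_(rarity r) -> S) :
  G (fun N => srel N as_) -> (forall i, G (fun N => eqv N (as_ i) (bs i))) ->
  G (fun N => srel N bs).
Proof.
move=> H Hi; have Ha := G_all HG (fun i => open_eqv (as_ i) (bs i)) Hi.
apply: (G_mono HG (G_and HG H Ha) (open_srel _)) => N _ [H1 H2].
exact: rel_sat H1 H2.
Qed.

Lemma mk_fn_dom Sig S T G (HG : good Sig S T G) f (as_ : 'I_(farity f) -> S) b :
  G (fun N => sfn N as_ b) ->
  (forall i, G (fun N => eqv N (as_ i) (as_ i))) /\ G (fun N => eqv N b b).
Proof.
move=> H; split.
  move=> i; apply: (G_mono HG H (open_eqv _ _)) => N _ Hf; exact: (proj1 (fn_dom Hf) i).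
apply: (G_mono HG H (open_eqv _ _)) => N _ Hf; exact: (proj2 (fn_dom Hf)).
Qed.

Lemma mk_fn_sat Sig S T G (HG : good Sig S T G) f (as_ bs : 'I_(farity f) -> S) b c :
  G (fun N => sfn N as_ b) -> (forall i, G (fun N => eqv N (as_ i) (bs i))) ->
  G (fun N => eqv N b c) -> G (fun N => sfn N bs c).
Proof.
move=> H Hi Hbc; have Ha := G_all HG (fun i => open_eqv (as_ i) (bs i)) Hi.
apply: (G_mono HG (G_and HG H (G_and HG Ha Hbc)) (open_sfn _ _)) => N _ [H1 [H2 H3]].
exact: fn_sat H1 H2 H3.
Qed.

Lemma mk_fn_total Sig S T G (HG : good Sig S T G) f (as_ : 'I_(farity f) -> S) :
  (forall i, G (fun N => eqv N (as_ i) (as_ i))) -> exists b, G (fun N => sfn N as_ b).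
Proof.
move=> Hi; have Ha := G_all HG (fun i => open_eqv (as_ i) (as_ i)) Hi.
have H := G_mono HG (V := fun N => exists b, sfn N as_ b) Ha
   (open_ex (fun b => open_sfn as_ b)) (fun N _ H => fn_total H).
exact: (G_prime HG (fun b => open_sfn as_ b) H).
Qed.

Lemma mk_fn_func Sig S T G (HG : good Sig S T G) f (as_ : 'I_(farity f) -> S) b c :
  G (fun N => sfn N as_ b) -> G (fun N => sfn N as_ c) -> G (fun N => eqv N b c).
Proof.
move=> H1 H2; apply: (G_mono HG (G_and HG H1 H2) (open_eqv _ _)) => N _ [].
exact: fn_func.
Qed.

Definition Mof Sig S T G (HG : good Sig S T G) : structure Sig S :=
  {| eqv := fun a b => G (fun N => eqv N a b);
     eqv_sym := mk_sym HG;
     eqv_trans := mk_trans HG;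
     srel := fun r as_ => G (fun N => srel N as_);
     rel_dom := mk_rel_dom HG;
     rel_sat := mk_rel_sat HG;
     sfn := fun f as_ b => G (fun N => sfn N as_ b);
     fn_dom := mk_fn_dom HG;
     fn_sat := mk_fn_sat HG;
     fn_total := mk_fn_total HG;
     fn_func := mk_fn_func HG |}.

Lemma Mof_basic Sig S T G (HG : good Sig S T G) W :
  M_subbasis W -> (G W <-> W (Mof HG)).
Proof.
by case=> [[a ->]|[[a [b ->]]|[[r [as_ ->]]|[f [as_ [b ->]]]]]]; split=> H; exact H.
Qed.

Lemma teval_open Sig S n (t : term Sig n) (v : nat -> S) b :
  gen_open (@M_subbasis Sig S) (fun N => teval N v t b).
Proof.
elim: t b => [i|f args IH] b /=; first exact: open_eqv.
apply: open_ex => bs; apply: go_inter; last exact: open_sfn.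
by apply: open_all => i; exact: IH.
Qed.

Lemma teval_Mof Sig S T G (HG : good Sig S T G) n (t : term Sig n) v b :
  teval (Mof HG) v t b <-> G (fun N => teval N v t b).
Proof.
elim: t b => [i|f args IH] b /=; first by [].
split.
  case=> bs [Hi Hs].
  apply: (G_mono HG (U := fun N => (forall i, teval N v (args i) (bs i)) /\ sfn N bs b)).
  - apply: (G_and HG) => //; apply: (G_all HG) => i; [exact: teval_open|exact/IH].
  - apply: open_ex => cs; apply: go_inter; last exact: open_sfn.
    by apply: open_all => i; exact: teval_open.
  - by move=> N _ H; exists bs.
move/(G_prime HG) => [].
  move=> cs; apply: go_inter; last exact: open_sfn.
  by apply: open_all => i; exact: teval_open.
move=> bs H; exists bs; split.
  move=> i; apply/IH; apply: (G_mono HG H (teval_open _ _ _)) => N _ [H1 _]; exact: H1.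
apply: (G_mono HG H (open_sfn _ _)) => N _ []//.
Qed.



Lemma sat_open Sig S n (phi : gformula Sig n) : forall (v : nat -> S),
  gen_open (@M_subbasis Sig S) (fun N => sat N v phi).
Proof.
induction phi as [n r args|n t1 t2|n|n|n p IHp q IHq|n J ps IH|n p IH] => v /=.
- apply: open_ex => bs; apply: go_inter; last exact: open_srel.
  by apply: open_all => i; exact: teval_open.
- apply: open_ex => b1; apply: open_ex => b2.
  apply: go_inter; first exact: teval_open.
  apply: go_inter; first exact: teval_open.
  exact: open_eqv.
- exact: go_top.
- apply: (open_ext (go_union (F := fun _ => False) (fun U (H : False) => match H with end))).
  by move=> x; split=> [[U []]|].
- exact: go_inter.
- apply: open_ex => j; exact: IH.
- apply: open_ex => a; apply: go_inter; first exact: open_indom.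
  exact: IH.
Qed.

Lemma G_false X B P G (HG : @goodF X B P G) : ~ G (fun _ => False).
Proof.
move=> H.
have H' : G (fun x => exists j : False, (fun _ _ => False) j x).
  apply: (G_mono HG H); last by [].
  apply: open_ex => [[]].
by have [[] _] := G_prime HG (fun j : False => match j with end) H'.
Qed.

Lemma sat_Mof Sig S T G (HG : good Sig S T G) n (phi : gformula Sig n) : forall v,
  sat (Mof HG) v phi <-> G (fun N => sat N v phi).
Proof.
induction phi as [n r args|n t1 t2|n|n|n p IHp q IHq|n J ps IH|n p IH] => v /=.
- split.
    case=> bs [Hi Hs].
    apply: (G_mono HG (U := fun N => (forall i, teval N v (args i) (bs i)) /\ srel N bs)).
    + apply: (G_and HG) => //; apply: (G_all HG) => i; [exact: teval_open|apply/(teval_Mof HG); exact: Hi].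
    + apply: open_ex => cs; apply: go_inter; last exact: open_srel.
      by apply: open_all => i; exact: teval_open.
    + by move=> N _ H; exists bs.
  move/(G_prime HG) => [].
    move=> cs; apply: go_inter; last exact: open_srel.
    by apply: open_all => i; exact: teval_open.
  move=> bs H; exists bs; split.
    move=> i; apply/(teval_Mof HG); apply: (G_mono HG H (teval_open _ _ _)) => N _ [H1 _]; exact: H1.
  apply: (G_mono HG H (open_srel _)) => N _ []//.
- have Ho : forall b1 b2, gen_open (@M_subbasis Sig S)
     (fun N => teval N v t1 b1 /\ teval N v t2 b2 /\ eqv N b1 b2).
    move=> b1 b2; apply: go_inter; first exact: teval_open.
    apply: go_inter; first exact: teval_open.
    exact: open_eqv.
  split.
    case=> b1 [b2 [/(teval_Mof HG) H1 [/(teval_Mof HG) H2 H3]]].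
    apply: (G_mono HG (G_and HG H1 (G_and HG H2 H3))).
      apply: open_ex => c1; apply: open_ex => c2; exact: Ho.
    by move=> N _ H; exists b1, b2.
  move=> H.
  have H' : G (fun N => exists p : S * S, teval N v t1 p.1 /\ teval N v t2 p.2 /\ eqv N p.1 p.2).
    apply: (G_mono HG H); first by apply: open_ex => -[c1 c2]; exact: Ho.
    by move=> N _ [b1 [b2 Hb]]; exists (b1, b2).
  have [[b1 b2] /= Hb] := G_prime HG (fun p : S * S => Ho p.1 p.2) H'.
  exists b1, b2; split; [|split].
  + apply/(teval_Mof HG); apply: (G_mono HG Hb (teval_open _ _ _)) => N _ [] //.
  + apply/(teval_Mof HG); apply: (G_mono HG Hb (teval_open _ _ _)) => N _ [_ []] //.
  + apply: (G_mono HG Hb (open_eqv _ _)) => N _ [_ []] //.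
- split=> _ //; exact: (G_top HG).
- split=> // H; exact: (G_false HG H).
- split.
    by case=> /IHp H1 /IHq H2; apply: (G_and HG).
  move=> H; split; [apply/IHp|apply/IHq]; apply: (G_mono HG H (sat_open _ _)) => N _ [] //.
- split.
    case=> j /IH H; apply: (G_mono HG H); first by apply: open_ex => i; exact: sat_open.
    by move=> N _ Hj; exists j.
  move/(G_prime HG) => [].
    by move=> i; exact: sat_open.
  by move=> j /IH H; exists j.
- have Ho : forall a, gen_open (@M_subbasis Sig S)
     (fun N => indom N a /\ sat N (fun k => if k == n then a else v k) p).
    by move=> a; apply: go_inter; [exact: open_indom|exact: sat_open].
  split.
    case=> a [Ha /IH Hp]; apply: (G_mono HG (G_and HG Ha Hp)); first exact: open_ex.
    by move=> N _ H; exists a.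
  move/(G_prime HG) => [] //.
  move=> a H; exists a; split.
    apply: (G_mono HG H (open_indom _)) => N _ [] //.
  apply/IH; apply: (G_mono HG H (sat_open _ _)) => N _ [] //.
Qed.

Lemma Mof_model Sig S T G (HG : good Sig S T G) : is_model T (Mof HG).
Proof.
move=> s Ts v Hadm /sat_Mof Hant; apply/sat_Mof.
have Ha : G (fun N => forall i : 'I_(ctx s), indom N (v i)).
  apply: (G_all HG) => i; [exact: open_indom|exact: (Hadm i (ltn_ord i))].
apply: (G_mono HG (G_and HG Hant Ha) (sat_open _ _)) => N HN [H1 H2].
apply: (HN s Ts v) => // i Hi; exact: (H2 (Ordinal Hi)).
Qed.

Lemma struct_ext Sig S (M N : structure Sig S) :
  (forall a b, eqv M a b <-> eqv N a b) -> (forall r (as_ : 'I_(rarity r) -> S), srel M as_ <-> srel N as_) ->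
  (forall f (as_ : 'I_(farity f) -> S) b, sfn M as_ b <-> sfn N as_ b) -> M = N.
Proof.
case: M => e1 s1 t1 r1 rd1 rs1 f1 fd1 fs1 ft1 ff1.
case: N => e2 s2 t2 r2 rd2 rs2 f2 fd2 fs2 ft2 ff2 /= He Hr Hf.
have E1 : e1 = e2.
  apply: functional_extensionality => a; apply: pred_ext => b; exact: He.
have E2 : r1 = r2.
  apply: functional_extensionality_dep => r; apply: pred_ext => as_; exact: Hr.
have E3 : f1 = f2.
  apply: functional_extensionality_dep => f; apply: functional_extensionality => as_.
  apply: pred_ext => b; exact: Hf.
subst; f_equal; apply: proof_irrelevance.
Qed.

Lemma struct_eq_sub Sig S (M N : structure Sig S) :
  (forall W, M_subbasis W -> (W M <-> W N)) -> M = N.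
Proof.
move=> H; apply: struct_ext.
- move=> a b; apply: (H (fun M => eqv M a b)); right; left; by exists a, b.
- move=> r as_; apply: (H (fun M => srel M as_)); right; right; left; by exists r, as_.
- move=> f as_ b; apply: (H (fun M => sfn M as_ b)); right; right; right; by exists f, as_, b.
Qed.

Lemma MT_sober Sig S T : sober (@MT_open Sig S T).
Proof.
move=> F HF; have HG := Fp_good HF.
have HM := @Mof_model _ _ _ _ HG.
have key : forall W, gen_open (@M_subbasis Sig S) W -> (Fp F W <-> W (Mof HG)) :=
  good_open_iff HG (Mof_basic HG).
exists (exist _ (Mof HG) HM); split.
  move=> U [W [HW HU]].
  have -> : U = fun x => W (proj1_sig x) by apply: pred_ext.
  exact: key.
case=> N HN HN'.
have E : Mof HG = N.
  apply: struct_eq_sub => W HW; rewrite -(key W (go_basic HW)).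
  apply: (HN' (fun x => W (proj1_sig x))).
  by exists W; split; [exact: go_basic|].
subst; f_equal; apply: proof_irrelevance.
Qed.


Notation igood Sig S T G := (@goodF (iso Sig S) (@I_subbasis Sig S)
   (fun f => is_model T (isrc f) /\ is_model T (itgt f)) G).

Lemma open_src {Sig S} (V : structure Sig S -> Prop) :
  M_open V -> gen_open (@I_subbasis Sig S) (fun f => V (isrc f)).
Proof. move=> HV; apply: go_basic; left; by exists V. Qed.
Lemma open_tgt {Sig S} (V : structure Sig S -> Prop) :
  M_open V -> gen_open (@I_subbasis Sig S) (fun f => V (itgt f)).
Proof. move=> HV; apply: go_basic; right; left; by exists V. Qed.

Definition Im Sig S (a b : S) := fun f : iso Sig S => indom (isrc f) a /\ indom (itgt f) b /\ imap f a b.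
Lemma open_Im {Sig S} (a b : S) : gen_open (@I_subbasis Sig S) (Im a b).
Proof. apply: go_basic; right; right; by exists a, b. Qed.

Lemma src_good Sig S T G (HG : igood Sig S T G) :
  good Sig S T (fun V => G (fun f => V (isrc f))).
Proof.
split.
- move=> U V HU HV HUV; apply: (G_mono HG HU (open_src HV)) => f [Hs _]; exact: HUV.
- exact: (G_top HG).
- move=> U V; exact: (G_and HG).
- move=> J W HW H; exact: (G_prime HG (fun j => open_src (HW j)) H).
Qed.

Lemma tgt_good Sig S T G (HG : igood Sig S T G) :
  good Sig S T (fun V => G (fun f => V (itgt f))).
Proof.
split.
- move=> U V HU HV HUV; apply: (G_mono HG HU (open_tgt HV)) => f [_ Hs]; exact: HUV.
- exact: (G_top HG).
- move=> U V; exact: (G_and HG).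
- move=> J W HW H; exact: (G_prime HG (fun j => open_tgt (HW j)) H).
Qed.


Definition M1 Sig S T G (HG : igood Sig S T G) := Mof (src_good HG).
Definition M2 Sig S T G (HG : igood Sig S T G) := Mof (tgt_good HG).

Lemma oe {Sig S} (a b : S) : M_open (fun N : structure Sig S => eqv N a b).
Proof. exact: open_eqv. Qed.

Lemma mi_dom Sig S T G (HG : igood Sig S T G) a b :
  G (Im a b) -> indom (M1 HG) a /\ indom (M2 HG) b.
Proof.
rewrite /M1 /M2 /Mof /indom /=.
move=> H; split.
  apply: (G_mono HG H (open_src (oe a a))) => f _ [] //.
apply: (G_mono HG H (open_tgt (oe b b))) => f _ [_ []] //.
Qed.

Lemma mi_sat Sig S T G (HG : igood Sig S T G) a a' b b' :
  G (Im a b) -> eqv (M1 HG) a a' -> eqv (M2 HG) b b' -> G (Im a' b').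
Proof.
rewrite /M1 /M2 /Mof /indom /=.
move=> H1 H2 H3; apply: (G_mono HG (G_and HG H1 (G_and HG H2 H3)) (open_Im _ _)).
move=> f _ [[Ha [Hb Hf]] [Ha' Hb']]; split; [|split].
- exact: eqv_trans (eqv_sym Ha') Ha'.
- exact: eqv_trans (eqv_sym Hb') Hb'.
- exact: imap_sat Hf Ha' Hb'.
Qed.

Lemma mi_total Sig S T G (HG : igood Sig S T G) a :
  indom (M1 HG) a -> exists b, G (Im a b).
Proof.
rewrite /M1 /M2 /Mof /indom /=.
move=> H; apply: (G_prime HG (fun b => open_Im a b)).
apply: (G_mono HG H); first by apply: open_ex => b; exact: open_Im.
move=> f _ Ha; have [b Hb] := imap_total Ha; exists b; split=> //.
by split=> //; exact: (proj2 (imap_dom Hb)).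
Qed.

Lemma mi_surj Sig S T G (HG : igood Sig S T G) b :
  indom (M2 HG) b -> exists a, G (Im a b).
Proof.
rewrite /M1 /M2 /Mof /indom /=.
move=> H; apply: (G_prime HG (fun a => open_Im a b)).
apply: (G_mono HG H); first by apply: open_ex => a; exact: open_Im.
move=> f _ Hb; have [a Ha] := imap_surj Hb; exists a; split.
  exact: (proj1 (imap_dom Ha)).
by split.
Qed.

Lemma mi_func Sig S T G (HG : igood Sig S T G) a b b' :
  G (Im a b) -> G (Im a b') -> eqv (M2 HG) b b'.
Proof.
rewrite /M1 /M2 /Mof /indom /=.
move=> H1 H2; apply: (G_mono HG (G_and HG H1 H2) (open_tgt (oe b b'))).
move=> f _ [[_ [_ H1']] [_ [_ H2']]]; exact: imap_func H1' H2'.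
Qed.

Lemma mi_inj Sig S T G (HG : igood Sig S T G) a a' b :
  G (Im a b) -> G (Im a' b) -> eqv (M1 HG) a a'.
Proof.
rewrite /M1 /M2 /Mof /indom /=.
move=> H1 H2; apply: (G_mono HG (G_and HG H1 H2) (open_src (oe a a'))).
move=> f _ [[_ [_ H1']] [_ [_ H2']]]; exact: imap_inj H1' H2'.
Qed.

Lemma mi_rel Sig S T G (HG : igood Sig S T G) r (as_ bs : 'I_(rarity r) -> S) :
  (forall i, G (Im (as_ i) (bs i))) -> (srel (M1 HG) as_ <-> srel (M2 HG) bs).
Proof.
rewrite /M1 /M2 /Mof /indom /=.
move=> Hi; have Ha := G_all HG (fun i => open_Im (as_ i) (bs i)) Hi.
split=> H.
  apply: (G_mono HG (G_and HG H Ha) (open_tgt (open_srel bs))) => f _ [H1 H2].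
  exact: (proj1 (imap_rel (fun i => proj2 (proj2 (H2 i)))) H1).
apply: (G_mono HG (G_and HG H Ha) (open_src (open_srel as_))) => f _ [H1 H2].
exact: (proj2 (imap_rel (fun i => proj2 (proj2 (H2 i)))) H1).
Qed.

Lemma mi_fn Sig S T G (HG : igood Sig S T G) fs (as_ bs : 'I_(farity fs) -> S) a b :
  (forall i, G (Im (as_ i) (bs i))) -> G (Im a b) -> (sfn (M1 HG) as_ a <-> sfn (M2 HG) bs b).
Proof.
rewrite /M1 /M2 /Mof /indom /=.
move=> Hi Hab; have Ha := G_all HG (fun i => open_Im (as_ i) (bs i)) Hi.
have Hab' := G_and HG Ha Hab.
split=> H.
  apply: (G_mono HG (G_and HG H Hab') (open_tgt (open_sfn bs b))) => f _ [H1 [H2 H3]].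
  exact: (proj1 (imap_fn (fun i => proj2 (proj2 (H2 i))) (proj2 (proj2 H3))) H1).
apply: (G_mono HG (G_and HG H Hab') (open_src (open_sfn as_ a))) => f _ [H1 [H2 H3]].
exact: (proj2 (imap_fn (fun i => proj2 (proj2 (H2 i))) (proj2 (proj2 H3))) H1).
Qed.



Definition isoOf Sig S T G (HG : igood Sig S T G) : iso Sig S :=
  {| isrc := M1 HG; itgt := M2 HG; imap := fun a b => G (Im a b);
     imap_dom := @mi_dom _ _ _ _ HG;
     imap_sat := @mi_sat _ _ _ _ HG;
     imap_total := @mi_total _ _ _ _ HG;
     imap_func := @mi_func _ _ _ _ HG;
     imap_inj := @mi_inj _ _ _ _ HG;
     imap_surj := @mi_surj _ _ _ _ HG;
     imap_rel := @mi_rel _ _ _ _ HG;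
     imap_fn := @mi_fn _ _ _ _ HG |}.

Lemma iso_basic Sig S T G (HG : igood Sig S T G) W :
  I_subbasis W -> (G W <-> W (isoOf HG)).
Proof.
case=> [[V [HV ->]]|[[V [HV ->]]|[a [b ->]]]].
- exact: (good_open_iff (src_good HG) (Mof_basic (src_good HG)) HV).
- exact: (good_open_iff (tgt_good HG) (Mof_basic (tgt_good HG)) HV).
- split.
    move=> H; have [H1 H2] := mi_dom HG H; by split; [|split].
  by case=> _ [_ H].
Qed.

Lemma iso_ext Sig S (f g : iso Sig S) :
  isrc f = isrc g -> itgt f = itgt g -> (forall a b, imap f a b <-> imap g a b) -> f = g.
Proof.
case: f => s1 t1 m1 p1 p2 p3 p4 p5 p6 p7 p8.
case: g => s2 t2 m2 q1 q2 q3 q4 q5 q6 q7 q8 /= E1 E2 Hm.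
have E3 : m1 = m2.
  apply: functional_extensionality => a; apply: pred_ext => b; exact: Hm.
subst; f_equal; apply: proof_irrelevance.
Qed.

Lemma IT_sober Sig S T : sober (@IT_open Sig S T).
Proof.
move=> F HF; have HG := Fp_good HF.
have HM1 := @Mof_model _ _ _ _ (src_good HG).
have HM2 := @Mof_model _ _ _ _ (tgt_good HG).
have key : forall W, gen_open (@I_subbasis Sig S) W -> (Fp F W <-> W (isoOf HG)) :=
  good_open_iff HG (iso_basic HG).
exists (exist _ (isoOf HG) (conj HM1 HM2)); split.
  move=> U [W [HW HU]].
  have -> : U = fun x => W (proj1_sig x) by apply: pred_ext.
  exact: key.
case=> g Hg Hg'.
have Hy : forall W, gen_open (@I_subbasis Sig S) W -> (Fp F W <-> W g).
  move=> W HW; exact: (Hg' (fun x => W (proj1_sig x)) (ex_intro _ W (conj HW (fun x => iff_refl _)))).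
have E : isoOf HG = g.
apply: iso_ext => /=.
- apply: struct_eq_sub => W HW.
  have K := key _ (open_src (go_basic HW)); have K2 := Hy _ (open_src (go_basic HW)).
  simpl in K, K2; tauto.
- apply: struct_eq_sub => W HW.
  have K := key _ (open_tgt (go_basic HW)); have K2 := Hy _ (open_tgt (go_basic HW)).
  simpl in K, K2; tauto.
- move=> a b; have K2 := Hy _ (open_Im a b).
  rewrite /Fp /= in K2; rewrite /Im in K2.
  split=> H.
    by have [_ [_ ?]] := proj1 K2 H.
  by apply/K2; have [? ?] := imap_dom H; split; [|split].
subst; f_equal; apply: proof_irrelevance.
Qed.


Theorem proposition2p6 (Sig : signature) (S : Type)
  (HS : exists e : (funsym Sig + relsym Sig + nat) -> S, injective e)
  (T : theory Sig) :
  sober (@MT_open Sig S T) /\ sober (@IT_open Sig S T).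
Proof. split; [exact: MT_sober|exact: IT_sober]. Qed.
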